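(* Let $A\in\mathbb{C}^{p\times p}$ and $C\in\mathbb{C}^{q\times q}$ be Hermitian positive semidefinite, let $B\in\mathbb{C}^{p\times q}$, and let $H=\begin{bmatrix} A & B\\ B^* & -C\end{bmatrix}$. For every $t>0$, the null-space of $H$ coincides with the null-space of the matrix obtained from $H$ by replacing $A$ by $tA$; likewise for the matrix obtained by replacing $B$ by $tB$ (and $B^*$ by $tB^*$), and for the matrix obtained by replacing $C$ by $tC$. *)

(* Defs.v *)
From HB Require Import structures.
From mathcomp Require Import all_boot all_order all_algebra.
From mathcomp Require Import complex.
From mathcomp Require Import reals.
Set Implicit Arguments. Unset Strict Implicit. Unset Printing Implicit Defensive.
Import Order.TTheory GRing.Theory Num.Theory.
Local Open Scope ring_scope.

Definition ctrmx (R : realType) (m n : nat) (B : 'M[R[i]]_(m, n)) : 'M[R[i]]_(n, m) :=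
  (map_mx (@conjc R) B)^T.

Definition hermitian (R : realType) (n : nat) (A : 'M[R[i]]_n) : Prop :=
  ctrmx A = A.

(* positive semidefinite: x^* A x >= 0 for all x (in the order of C, which
   also forces x^* A x to be real) *)
Definition psd (R : realType) (n : nat) (A : 'M[R[i]]_n) : Prop :=
  forall x : 'cV[R[i]]_n, 0 <= (ctrmx x *m A *m x) 0 0.

Definition hermitian_psd (R : realType) (n : nat) (A : 'M[R[i]]_n) : Prop :=
  hermitian A /\ psd A.

Definition Hmat (R : realType) (p q : nat) (A : 'M[R[i]]_p) (B : 'M[R[i]]_(p, q))
  (C : 'M[R[i]]_q) : 'M[R[i]]_(p + q) :=
  block_mx A B (ctrmx B) (- C).

Definition nullspace (R : realType) (n : nat) (M : 'M[R[i]]_n) : 'cV[R[i]]_n -> Prop :=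
  fun x => M *m x = 0.

(* Main.v *)
Require Import Defs.
From HB Require Import structures.
From mathcomp Require Import all_boot all_order all_algebra.
From mathcomp Require Import complex.
From mathcomp Require Import reals.
From mathcomp Require Import ring lra.
Import Order.TTheory GRing.Theory Num.Theory.
Local Open Scope ring_scope.
Section S.
Variable R : realType.
Local Notation CC := R[i].
Lemma ctrmx_mul m n k (X : 'M[CC]_(m,n)) (Y : 'M[CC]_(n,k)) : ctrmx (X *m Y) = ctrmx Y *m ctrmx X.
Proof. by rewrite /ctrmx map_mxM trmx_mul. Qed.
Lemma ctrmxD m n (X Y : 'M[CC]_(m,n)) : ctrmx (X + Y) = ctrmx X + ctrmx Y.
Proof. by rewrite /ctrmx map_mxD linearD. Qed.
Lemma ctrmxN m n (X : 'M[CC]_(m,n)) : ctrmx (- X) = - ctrmx X.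
Proof. by rewrite /ctrmx map_mxN linearN. Qed.
Lemma ctrmxZ m n (t : R) (X : 'M[CC]_(m,n)) : ctrmx ((t%:C)%C *: X) = (t%:C)%C *: ctrmx X.
Proof. by rewrite /ctrmx map_mxZ /= oppr0 linearZ. Qed.
Lemma ctrmxK m n (X : 'M[CC]_(m,n)) : ctrmx (ctrmx X) = X.
Proof. by apply/matrixP => i j; rewrite /ctrmx !mxE conjcK. Qed.
Lemma ctrmx11 (X : 'M[CC]_1) : ctrmx X 0 0 = ((X 0 0)^*)%C.
Proof. by rewrite /ctrmx !mxE. Qed.
Lemma norm_eq0 n (y : 'cV[CC]_n) : (ctrmx y *m y) 0 0 = 0 -> y = 0.
Proof.
rewrite mxE => /eqP; rewrite psumr_eq0 => [/allP H|i _].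
  apply/matrixP => i j; rewrite (ord1 j) mxE.
  have := H i (mem_index_enum _); rewrite /ctrmx !mxE mulrC => /implyP/(_ isT) /eqP.
  by move/eqP; rewrite -sqr_normc sqrf_eq0 normr_eq0 => /eqP.
by rewrite /ctrmx !mxE mulrC mulcJ_ge0.
Qed.
Lemma ge0_RRe (z : CC) : 0 <= z -> z = ((complex.Re z)%:C)%C.
Proof. by move=> h; rewrite RRe_real // ger0_real. Qed.

Lemma quad_aux (n m : R) : 0 <= n -> 0 <= m ->
  (forall s : R, 0 <= s ^+ 2 * m - 2%:R * s * n) -> n = 0.
Proof.
move=> n0 m0 H; have := H (n / (m + 1)).
have m1 : m + 1 != 0 by rewrite gt_eqF // ltr_wpDl.
have -> : (n / (m + 1)) ^+ 2 * m - 2%:R * (n / (m + 1)) * n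
   = - (n ^+ 2 * (m + 2%:R)) / (m + 1) ^+ 2 by field.
rewrite pmulr_lge0 ?invr_gt0 ?exprn_gt0 ?ltr_wpDl // oppr_ge0 => h.
have : n ^+ 2 * (m + 2%:R) == 0.
  by rewrite eq_le h mulr_ge0 ?sqr_ge0 ?addr_ge0.
by rewrite mulf_eq0 sqrf_eq0 paddr_eq0 // pnatr_eq0 andbF orbF => /eqP.
Qed.

Lemma ent (X Y Z : 'M[CC]_1) (a b : CC) :
  (X - a *: Y + b *: Z) 0 0 = X 0 0 - a * Y 0 0 + b * Z 0 0.
Proof. by rewrite !mxE. Qed.

Lemma psd_null n (A : 'M[CC]_n) (u : 'cV[CC]_n) : Defs.hermitian A -> psd A ->
  (ctrmx u *m A *m u) 0 0 = 0 -> A *m u = 0.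
Proof.
move=> hA pA h0; apply: norm_eq0.
set y := A *m u.
have cy : ctrmx y = ctrmx u *m A by rewrite /y ctrmx_mul hA.
have E : forall s : R, ctrmx (u - (s%:C)%C *: y) *m A *m (u - (s%:C)%C *: y)
  = ctrmx u *m A *m u - ((2%:R * s)%:C)%C *: (ctrmx y *m y)
     + ((s ^+ 2)%:C)%C *: (ctrmx y *m A *m y).
  move=> s; rewrite ctrmxD ctrmxN ctrmxZ cy /y.
  rewrite !(mulmxDl, mulmxDr, mulNmx, mulmxN).
  rewrite -!scalemxAl -!scalemxAr !scalerA !mulmxA.
  set X := ctrmx u *m A *m u; set Y := ctrmx u *m A *m A *m u; set Z := ctrmx u *m A *m A *m A *m u.
  apply/matrixP => i j; rewrite !mxE.
  have e1 : ((2 * s)%:C)%C = 2 * (s%:C)%C :> CC.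
    by apply/eqP; simpc.
  have e2 : ((s ^+ 2)%:C)%C = (s%:C)%C ^+ 2 :> CC.
    rewrite expr2 expr2; by apply/eqP; simpc.
  rewrite e1 e2; ring.
have N0 : 0 <= (ctrmx y *m y) 0 0.
  by rewrite mxE sumr_ge0 // => i _; rewrite /ctrmx !mxE mulrC mulcJ_ge0.
have M0 : 0 <= (ctrmx y *m A *m y) 0 0 by apply: pA.
set nR := complex.Re ((ctrmx y *m y) 0 0).
set mR := complex.Re ((ctrmx y *m A *m y) 0 0).
have eN := ge0_RRe _ N0; have eM := ge0_RRe _ M0.
suff nR0 : nR = 0 by rewrite eN -/nR nR0.
apply: (@quad_aux _ mR); rewrite -?ler0c -?eN -?eM //.
move=> s; have := pA (u - (s%:C)%C *: y); rewrite E ent h0 eN eM -/nR -/mR.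
by simpc; rewrite addrC.
Qed.
Lemma oppE (M : 'M[CC]_1) : (- M) 0 0 = - M 0 0.
Proof. by rewrite mxE. Qed.

Lemma null_char p q (A : 'M[CC]_p) (B : 'M[CC]_(p, q)) (C : 'M[CC]_q) x :
  hermitian_psd A -> hermitian_psd C ->
  nullspace (Hmat A B C) x <->
  [/\ A *m usubmx x = 0, B *m dsubmx x = 0, ctrmx B *m usubmx x = 0 & C *m dsubmx x = 0].
Proof.
move=> [hA pA] [hC pC].
rewrite /nullspace /Hmat -{1}[x]vsubmxK mul_block_col.
set u := usubmx x; set v := dsubmx x.
split; last first.
  by case=> h1 h2 h3 h4; rewrite mulNmx h1 h2 h3 h4 addr0 oppr0 addr0 col_mx0.
move/eqP; rewrite col_mx_eq0 => /andP[/eqP h1 /eqP h2].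
have e1 : ctrmx u *m A *m u = - (ctrmx u *m B *m v).
  apply/eqP; rewrite -addr_eq0 -!mulmxA -mulmxDr h1 mulmx0 //.
have e2 : ctrmx v *m C *m v = ctrmx (ctrmx u *m B *m v).
  rewrite !ctrmx_mul ctrmxK; apply/eqP; rewrite -subr_eq0 -!mulmxA -mulmxBr.
  by rewrite mulNmx in h2; rewrite -opprB h2 oppr0 mulmx0.
have a0 := pA u; have c0 := pC v.
have ac : (ctrmx v *m C *m v) 0 0 = - (ctrmx u *m A *m u) 0 0.
  rewrite e2 ctrmx11 e1 oppE opprK.
  have -> : (ctrmx u *m B *m v) 0 0 = - (ctrmx u *m A *m u) 0 0 by rewrite e1 oppE opprK.
  by rewrite rmorphN (ge0_RRe _ a0) /= oppr0.
have /andP[/eqP a00 /eqP c00] :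
  ((ctrmx u *m A *m u) 0 0 == 0) && ((ctrmx v *m C *m v) 0 0 == 0).
  by rewrite -paddr_eq0 // ac subrr.
have Au : A *m u = 0 by apply: psd_null; [exact: hA | exact: pA | exact: a00].
have Cv : C *m v = 0 by apply: psd_null; [exact: hC | exact: pC | exact: c00].
split=> //.
  by move: h1; rewrite Au add0r.
by move: h2; rewrite mulNmx Cv oppr0 addr0.
Qed.
Lemma scl0 (t : R) m n k (M : 'M[CC]_(m, n)) (w : 'M[CC]_(n, k)) : 0 < t ->
  ((t%:C)%C *: M) *m w = 0 <-> M *m w = 0.
Proof.
move=> t0; rewrite -scalemxAl; split; last by move=> ->; rewrite scaler0.
move/eqP; rewrite scaler_eq0 => /orP[/eqP|/eqP //].
by move/complexI => /eqP; rewrite gt_eqF.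
Qed.

Lemma hpsd_scale (t : R) n (A : 'M[CC]_n) : 0 < t -> hermitian_psd A ->
  hermitian_psd ((t%:C)%C *: A).
Proof.
move=> t0 [hA pA]; split; first by rewrite /Defs.hermitian ctrmxZ hA.
move=> x; rewrite -scalemxAr scalemxAl -!scalemxAl mxE.
apply: mulr_ge0; last exact: pA.
by rewrite lecE /= eqxx ltW.
Qed.
End S.

Theorem corollary2p3 (R : realType) (p q : nat)
  (A : 'M[R[i]]_p) (B : 'M[R[i]]_(p, q)) (C : 'M[R[i]]_q) :
  hermitian_psd A -> hermitian_psd C ->
  forall t : R, 0 < t ->
    (forall x, nullspace (Hmat A B C) x <-> nullspace (Hmat ((t%:C)%C *: A) B C) x) /\
    (forall x, nullspace (Hmat A B C) x <-> nullspace (Hmat A ((t%:C)%C *: B) C) x) /\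
    (forall x, nullspace (Hmat A B C) x <-> nullspace (Hmat A B ((t%:C)%C *: C)) x).
Proof.
move=> hA hC t t0; have hA2 := @hpsd_scale R t _ A t0 hA; have hC2 := @hpsd_scale R t _ C t0 hC.
split; [|split] => x; rewrite !null_char //; split; case=> h1 h2 h3 h4; split;
  by move: h1 h2 h3 h4; rewrite ?ctrmxZ ?scl0.
Qed.
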